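(* Let $N\ge1$, $\lambda,\lambda',\mu,a,b\in\mathbb{K}$ with $\mu\neq0$, $a\ne0$, $b\notin\{-1,-2,\ldots\}$. Then the Lie algebras $\mathfrak{g}^{(1)}(N,\lambda,a,b)_+$ and $\mathfrak{g}^{(3)}(N,\lambda',\mu)_+$ are both isomorphic to the semidirect product $\left(V_{-\frac1N}\oplus\cdots\oplus V_{-\frac{N-1}{N}}\right)\rtimes\mathfrak{g}_{FdB}$ (which is just $\mathfrak{g}_{FdB}$ when $N=1$).
   Context: Base field $\mathbb{K}$ of characteristic zero. On $\mathbb{K}[X]$: $\mathfrak{g}^{(1)}(N,\lambda,a,b)$ has $X^i\bullet X^j=i\lambda X^i$ if $j=0$, $\frac{ai}{j/N+b}X^{i+j}$ if $j\ne0$ and $N\mid j$, $0$ otherwise; $\mathfrak{g}^{(3)}(N,\lambda',\mu)$ has $X^i\bullet X^j=i\lambda' X^i$ if $j=0$, $i\mu X^{i+j}$ if $j\neq0$ and $N\mid j$, $0$ otherwise. For such a preLie product, $\mathfrak{g}_+$ denotes $\mathbb{K}[X]_+=\mathrm{Vect}(X^i,i\ge1)$ with Lie bracket $[P,Q]=P\bullet Q-Q\bullet P$. $\mathfrak{g}_{FdB}$ is the Lie algebra with basis $(e_i)_{i\ge1}$ and $[e_i,e_j]=(i-j)e_{i+j}$. For $\alpha\in\mathbb{K}$, $V_\alpha$ is the right $\mathfrak{g}_{FdB}$-module with basis $(f_i)_{i\ge1}$ and $f_i.e_j=(i+\alpha)f_{i+j}$. For a Lie algebra $\mathfrak{g}$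 and a right $\mathfrak{g}$-module $M$, $M\rtimes\mathfrak{g}$ is $M\oplus\mathfrak{g}$ with $M$ abelian, $[m,x]=m.x$ for $m\in M$, $x\in\mathfrak{g}$, and the bracket of $\mathfrak{g}$ on $\mathfrak{g}$. *)

(* Defs.v *)
From HB Require Import structures.
From mathcomp Require Import all_boot all_order all_algebra.
Set Implicit Arguments. Unset Strict Implicit. Unset Printing Implicit Defensive.
Import Order.TTheory GRing.Theory Num.Theory.
Local Open Scope ring_scope.

(* K[X] is modelled by {poly K}; X^i is 'X^i.
   K[X]_+ = Vect(X^i, i >= 1) is the subspace of polynomials with zero constant term. *)
Definition plus_part (K : fieldType) : pred {poly K} := fun p => p`_0 == 0.

Definition bilin (K : fieldType) (m : nat -> nat -> {poly K}) (p q : {poly K}) : {poly K} :=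
  \sum_(i < size p) \sum_(j < size q) (p`_i * q`_j) *: m i j.

Definition g1_mon (K : fieldType) (N : nat) (lam a b : K) (i j : nat) : {poly K} :=
  if j == 0%N then (i%:R * lam) *: 'X^i
  else if (N %| j)%N then (a * i%:R / (j%:R / N%:R + b)) *: 'X^(i + j)
  else 0.

Definition g3_mon (K : fieldType) (N : nat) (lam' mu : K) (i j : nat) : {poly K} :=
  if j == 0%N then (i%:R * lam') *: 'X^i
  else if (N %| j)%N then (i%:R * mu) *: 'X^(i + j)
  else 0.

Definition g1_pl (K : fieldType) N lam a b := bilin (@g1_mon K N lam a b).
Definition g3_pl (K : fieldType) N lam' mu := bilin (@g3_mon K N lam' mu).

Definition preLie_br (K : fieldType) (pl : {poly K} -> {poly K} -> {poly K}) p q :=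
  pl p q - pl q p.

(* g_FdB: basis e_i (i >= 1) encoded as 'X^i (elements: polys with zero constant term),
   [e_i, e_j] = (i - j) e_{i+j} *)
Definition fdb_br (K : fieldType) : {poly K} -> {poly K} -> {poly K} :=
  bilin (fun i j => (i%:R - j%:R) *: 'X^(i + j)).

(* V_alpha: basis f_i (i >= 1) encoded as 'X^i; right action f_i . e_j = (i + alpha) f_{i+j} *)
Definition Vact (K : fieldType) (alpha : K) : {poly K} -> {poly K} -> {poly K} :=
  bilin (fun i j => (i%:R + alpha) *: 'X^(i + j)).

(* (V_{-1/N} (+) ... (+) V_{-(N-1)/N}) x| g_FdB : an element is a finite function
   F : 'I_N -> {poly K}, where component 0 is the g_FdB part and component k
   (1 <= k <= N-1) is the V_{-k/N} part; all components have zero constant term. *)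
Definition SD (K : fieldType) (N : nat) := {ffun 'I_N -> {poly K}}.

Definition SD_dom (K : fieldType) (N : nat) : pred (SD K N) :=
  fun F => [forall k, (F k)`_0 == 0].

Definition SD_g (K : fieldType) (N : nat) (F : SD K N) : {poly K} :=
  \sum_(l : 'I_N | val l == 0%N) F l.

Definition SD_br (K : fieldType) (N : nat) (F G : SD K N) : SD K N :=
  [ffun k : 'I_N =>
     if val k == 0%N then fdb_br (SD_g F) (SD_g G)
     else Vact (- (k%:R / N%:R)) (F k) (SD_g G) - Vact (- (k%:R / N%:R)) (G k) (SD_g F)].

Definition lie_iso_onto (K : fieldType) (T : lmodType K) (D : pred T)
    (brT : T -> T -> T) (brE : {poly K} -> {poly K} -> {poly K})
    (psi : T -> {poly K}) : Prop :=
  [/\ {in D &, forall x y, forall c : K, psi (c *: x + y) = c *: psi x + psi y},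
      {in D &, injective psi},
      {in D, forall x, plus_part (psi x)},
      (forall p, plus_part p -> exists2 x, x \in D & psi x = p) &
      {in D &, forall x y, psi (brT x y) = brE (psi x) (psi y)}].

(* Main.v *)
Require Import Defs.
From HB Require Import structures.
From mathcomp Require Import all_boot all_order all_algebra.
From mathcomp Require Import ring zify.
Import GRing.Theory.
Local Open Scope ring_scope.
Set Implicit Arguments. Unset Strict Implicit. Unset Printing Implicit Defensive.

Definition linmon (K : fieldType) (V : lmodType K) (f : nat -> V) (p : {poly K}) : V :=
  \sum_(i < size p) p`_i *: f i.

Definition islin (K : fieldType) (U V : lmodType K) (L : U -> V) :=
  forall (c : K) p q, L (c *: p + q) = c *: L p + L q.

Lemma islin0 (K : fieldType) (U V : lmodType K) (L : U -> V) : islin L -> L 0 = 0.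
Proof.
move=> hL; have h := hL 1 0 0; rewrite !scale1r !addr0 in h.
by apply: (addrI (L 0)); rewrite addr0 -h.
Qed.

Lemma islinD (K : fieldType) (U V : lmodType K) (L : U -> V) : islin L ->
  forall p q, L (p + q) = L p + L q.
Proof. by move=> hL p q; have := hL 1 p q; rewrite !scale1r. Qed.

Lemma islinZ (K : fieldType) (U V : lmodType K) (L : U -> V) : islin L ->
  forall c p, L (c *: p) = c *: L p.
Proof. by move=> hL c p; have := hL c p 0; rewrite (islin0 hL) !addr0. Qed.

Lemma islinN (K : fieldType) (U V : lmodType K) (L : U -> V) : islin L ->
  forall p, L (- p) = - L p.
Proof. by move=> hL p; rewrite -scaleN1r islinZ // scaleN1r. Qed.

Lemma islinB (K : fieldType) (U V : lmodType K) (L : U -> V) : islin L ->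
  forall p q, L (p - q) = L p - L q.
Proof. by move=> hL p q; rewrite islinD // islinN. Qed.

Lemma islin_sum (K : fieldType) (U V : lmodType K) (L : U -> V) : islin L ->
  forall (I : Type) (r : seq I) (P : pred I) (F : I -> U),
  L (\sum_(i <- r | P i) F i) = \sum_(i <- r | P i) L (F i).
Proof.
move=> hL I r P F; apply: (big_morph L (islinD hL) (islin0 hL)).
Qed.

Lemma linmon_bound (K : fieldType) (V : lmodType K) (f : nat -> V) (p : {poly K}) n :
  (size p <= n)%N -> linmon f p = \sum_(i < n) p`_i *: f i.
Proof.
move=> hn; rewrite /linmon (big_ord_widen _ (fun i => p`_i *: f i) hn) big_mkcond /=.
apply: eq_bigr => i _; case: ifP => // /negbT; rewrite -leqNgt => hi.
by rewrite nth_default // scale0r.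
Qed.

Lemma linmon_lin (K : fieldType) (V : lmodType K) (f : nat -> V) : islin (linmon f).
Proof.
move=> c p q; set n := maxn (size p) (size q).
have hp : (size p <= n)%N by rewrite leq_maxl.
have hq : (size q <= n)%N by rewrite leq_maxr.
have hpq : (size (c *: p + q)%R <= n)%N.
  apply: leq_trans (size_polyD _ _) _; rewrite geq_max hq andbT.
  exact: leq_trans (size_scale_leq _ _) hp.
rewrite (linmon_bound _ hp) (linmon_bound _ hq) (linmon_bound _ hpq).
rewrite scaler_sumr -big_split /=; apply: eq_bigr => i _.
by rewrite coefD coefZ scalerDl scalerA.
Qed.

Lemma linmonXn (K : fieldType) (V : lmodType K) (f : nat -> V) i :
  linmon f 'X^i = f i.
Proof.
rewrite (@linmon_bound _ _ _ _ i.+1) ?size_polyXn // big_ord_recr /= big1.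
  by rewrite add0r coefXn eqxx scale1r.
by move=> j _; rewrite coefXn (ltn_eqF (ltn_ord j)) scale0r.
Qed.

Lemma linmon_fun (K : fieldType) (V : lmodType K) (f g : nat -> V) c p :
  linmon (fun i => c *: f i + g i) p = c *: linmon f p + linmon g p.
Proof.
rewrite /linmon scaler_sumr -big_split /=; apply: eq_bigr => i _.
by rewrite scalerDr !scalerA mulrC.
Qed.

Lemma eq_linmon (K : fieldType) (V : lmodType K) (f g : nat -> V) p :
  (forall i, f i = g i) -> linmon f p = linmon g p.
Proof. by move=> h; rewrite /linmon; apply: eq_bigr => i _; rewrite h. Qed.

Lemma linmon_id (K : fieldType) (p : {poly K}) : linmon (fun i => 'X^i) p = p.
Proof. by rewrite /linmon -poly_def coefK. Qed.

Lemma lin_expand (K : fieldType) (V : lmodType K) (L : {poly K} -> V) :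
  islin L -> forall p, L p = linmon (fun i => L 'X^i) p.
Proof.
move=> hL p; rewrite -{1}(linmon_id p) /linmon islin_sum //.
by apply: eq_bigr => i _; rewrite islinZ.
Qed.

Lemma lin_ext (K : fieldType) (V : lmodType K) (L1 L2 : {poly K} -> V) :
  islin L1 -> islin L2 -> (forall i, (0 < i)%N -> L1 'X^i = L2 'X^i) ->
  forall p : {poly K}, p`_0 = 0 -> L1 p = L2 p.
Proof.
move=> h1 h2 h p p0; rewrite (lin_expand h1) (lin_expand h2) /linmon.
apply: eq_bigr => [[[|i] hi]] _ /=; first by rewrite p0 !scale0r.
by rewrite h.
Qed.

Definition isbilin (K : fieldType) (U V : lmodType K) (B : U -> U -> V) :=
  (forall q, islin (B ^~ q)) /\ (forall p, islin (B p)).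

Lemma bilin_ext (K : fieldType) (V : lmodType K) (B1 B2 : {poly K} -> {poly K} -> V) :
  isbilin B1 -> isbilin B2 ->
  (forall i j, (0 < i)%N -> (0 < j)%N -> B1 'X^i 'X^j = B2 'X^i 'X^j) ->
  forall p q : {poly K}, p`_0 = 0 -> q`_0 = 0 -> B1 p q = B2 p q.
Proof.
move=> [h1l h1r] [h2l h2r] h p q p0 q0.
apply: (lin_ext (h1l q) (h2l q)) => // i hi.
by apply: (lin_ext (h1r _) (h2r _)) => // j hj; apply: h.
Qed.

Lemma bilinE (K : fieldType) (m : nat -> nat -> {poly K}) p q :
  bilin m p q = linmon (fun i => linmon (m i) q) p.
Proof.
rewrite /bilin /linmon; apply: eq_bigr => i _; rewrite scaler_sumr.
by apply: eq_bigr => j _; rewrite scalerA.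
Qed.

Lemma bilin_bilin (K : fieldType) (m : nat -> nat -> {poly K}) : isbilin (bilin m).
Proof.
split=> [q|p] c u v; rewrite !bilinE; first by rewrite linmon_lin.
rewrite -linmon_fun; apply: eq_linmon => i.
by rewrite linmon_lin.
Qed.

Lemma bilinXX (K : fieldType) (m : nat -> nat -> {poly K}) i j :
  bilin m 'X^i 'X^j = m i j.
Proof. by rewrite bilinE !linmonXn. Qed.

Lemma preLie_bilin (K : fieldType) (m : nat -> nat -> {poly K}) :
  isbilin (preLie_br (bilin m)).
Proof.
have [hl hr] := bilin_bilin m.
split=> [q|p] c u v; rewrite /preLie_br.
  by rewrite (hl q) (hr q) scalerBr; rewrite addrACA opprD.
by rewrite (hl p) (hr p) scalerBr; rewrite addrACA opprD.
Qed.

Definition mono (K : fieldType) (N : nat) (c : nat -> K) (k i : nat) : {poly K} :=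
  if k == 0%N then c i *: 'X^(N * i) else 'X^(N * i - k).

Definition Tm (K : fieldType) (N : nat) (c : nat -> K) (k : nat) := linmon (mono N c k).

Definition psiD (K : fieldType) (N : nat) (c : nat -> K) (F : SD K N) : {poly K} :=
  \sum_(k < N) Tm N c k (F k).

Definition mmN (N n : nat) := ((n + N.-1) %/ N)%N.
Definition kkN (N n : nat) := (N * mmN N n - n)%N.

Definition EN (K : fieldType) (N : nat) (c : nat -> K) (n : nat) : SD K N :=
  if n == 0%N then 0 else
  [ffun k : 'I_N => if val k == kkN N n then
     (if val k == 0%N then (c (mmN N n))^-1 else 1) *: 'X^(mmN N n) else 0].

Definition phiD (K : fieldType) (N : nat) (c : nat -> K) (p : {poly K}) : SD K N :=
  linmon (EN N c) p.

Definition delta (K : fieldType) (N : nat) (k : 'I_N) (p : {poly K}) : SD K N :=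
  [ffun l => if k == l then p else 0].

Lemma isbilin_comp (K : fieldType) (V : lmodType K) (B : {poly K} -> {poly K} -> V)
  (L1 L2 : {poly K} -> {poly K}) :
  isbilin B -> islin L1 -> islin L2 -> isbilin (fun p q => B (L1 p) (L2 q)).
Proof.
move=> [hl hr] h1 h2; split=> [q|p] c u v /=; first by rewrite h1 hl.
by rewrite h2 hr.
Qed.

Lemma isbilin_post (K : fieldType) (V : lmodType K) (B : {poly K} -> {poly K} -> {poly K})
  (L : {poly K} -> V) :
  isbilin B -> islin L -> isbilin (fun p q => L (B p q)).
Proof.
move=> [hl hr] h; split=> [q|p] c u v /=; first by rewrite hl h.
by rewrite hr h.
Qed.

Lemma isbilin0 (K : fieldType) (V : lmodType K) :
  isbilin (fun p q : {poly K} => (0 : V)).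
Proof. by split=> [q|p] c u v; rewrite scaler0 addr0. Qed.

Lemma preLie_anti (K : fieldType) (pl : {poly K} -> {poly K} -> {poly K}) u v :
  preLie_br pl u v = - preLie_br pl v u.
Proof. by rewrite /preLie_br opprB. Qed.

Lemma Tm_lin (K : fieldType) N (c : nat -> K) k : islin (Tm N c k).
Proof. exact: linmon_lin. Qed.

Lemma TmXn (K : fieldType) N (c : nat -> K) k i : Tm N c k 'X^i = mono N c k i.
Proof. exact: linmonXn. Qed.

Lemma psiD_lin (K : fieldType) N (c : nat -> K) : islin (@psiD K N c).
Proof.
move=> a F G; rewrite /psiD scaler_sumr -big_split /=; apply: eq_bigr => k _.
by rewrite !ffunE Tm_lin.
Qed.

Lemma phiD_lin (K : fieldType) N (c : nat -> K) : islin (@phiD K N c).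
Proof. exact: linmon_lin. Qed.

Lemma delta_lin (K : fieldType) N (k : 'I_N) : islin (@delta K N k).
Proof.
move=> a p q; apply/ffunP => l; rewrite !ffunE.
by case: ifP => _; rewrite ?scaler0 ?addr0.
Qed.

Lemma mm_sub N i k : (0 < N)%N -> (0 < i)%N -> (k < N)%N -> mmN N (N * i - k) = i.
Proof. rewrite /mmN => *; nia. Qed.
Lemma kk_sub N i k : (0 < N)%N -> (0 < i)%N -> (k < N)%N -> kkN N (N * i - k) = k.
Proof. move=> hN hi hk; rewrite /kkN mm_sub //; nia. Qed.
Lemma mm_pos N n : (0 < N)%N -> (0 < n)%N -> (0 < mmN N n)%N.
Proof. rewrite /mmN => *; nia. Qed.
Lemma kk_lt N n : (0 < N)%N -> (0 < n)%N -> (kkN N n < N)%N.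
Proof. rewrite /kkN /mmN => *; nia. Qed.
Lemma kk_eq N n : (0 < N)%N -> (0 < n)%N -> (N * mmN N n - kkN N n)%N = n.
Proof. rewrite /kkN /mmN => *; nia. Qed.

Lemma mono_coef0 (K : fieldType) N (c : nat -> K) k i :
  (0 < N)%N -> (0 < i)%N -> (k < N)%N -> (mono N c k i)`_0 = 0.
Proof.
move=> hN hi hk; rewrite /mono; case: eqP => _; rewrite ?coefZ coefXn eq_sym eqn0Ngt.
  have -> : (0 < N * i)%N by nia.
  by rewrite /= mulr0.
by have -> : (0 < N * i - k)%N by nia.
Qed.

Lemma phi_mono (K : fieldType) N (c : nat -> K) (k : 'I_N) i :
  (0 < N)%N -> (0 < i)%N -> c i != 0 ->
  phiD N c (mono N c k i) = delta k 'X^i.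
Proof.
move=> hN hi hc; rewrite /mono; case: eqP => hk.
  have e1 := @mm_sub N i 0 hN hi hN; have e2 := @kk_sub N i 0 hN hi hN.
  rewrite subn0 in e1 e2.
  rewrite (islinZ (@phiD_lin K N c)) /phiD linmonXn /EN ifF; last first.
    by apply/negbTE; rewrite -lt0n; nia.
  apply/ffunP => l; rewrite !ffunE e1 e2 -val_eqE /= hk eq_sym.
  case: eqP => _; last by rewrite scaler0.
  by rewrite scalerA mulfV ?scale1r.
have kN := ltn_ord k.
have hk0 : (0 < k)%N by rewrite lt0n; apply/eqP.
rewrite /phiD linmonXn /EN ifF; last by apply/negbTE; rewrite -lt0n; nia.
apply/ffunP => l; rewrite !ffunE (mm_sub hN hi kN) (kk_sub hN hi kN) -val_eqE /= eq_sym.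
case: eqP => hl //.
by rewrite -hl ifF ?scale1r //; apply/eqP.
Qed.

Lemma phi_psi (K : fieldType) N (c : nat -> K) (F : SD K N) :
  (0 < N)%N -> (forall i, (0 < i)%N -> c i != 0) -> (forall k, (F k)`_0 = 0) ->
  phiD N c (@psiD _ N c F) = F.
Proof.
move=> hN hc hF; rewrite /psiD (islin_sum (@phiD_lin K N c)).
have -> : \sum_(k < N) phiD N c (Tm N c k (F k)) = \sum_(k < N) delta k (F k).
  apply: eq_bigr => k _.
  apply: (@lin_ext _ _ (fun p => phiD N c (Tm N c k p)) (@delta K N k)) => //.
  - by move=> a p q; rewrite Tm_lin phiD_lin.
  - exact: delta_lin.
  by move=> i hi; rewrite TmXn phi_mono // hc.
apply/ffunP => l; rewrite sum_ffunE.
under eq_bigr do rewrite ffunE.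
by rewrite -big_mkcond big_pred1_eq.
Qed.

Lemma psi_phi (K : fieldType) N (c : nat -> K) (p : {poly K}) :
  (0 < N)%N -> (forall i, (0 < i)%N -> c i != 0) -> p`_0 = 0 ->
  @psiD _ N c (phiD N c p) = p.
Proof.
move=> hN hc p0.
apply: (@lin_ext _ _ (fun p => @psiD _ N c (phiD N c p)) id) => //.
- by move=> a u v; rewrite phiD_lin psiD_lin.
move=> n hn; rewrite /phiD linmonXn /EN ifF; last by apply/negbTE; rewrite -lt0n.
have hkk := kk_lt hN hn; set ko := Ordinal hkk.
rewrite /psiD (bigD1 ko) //= big1 ?addr0; last first.
  move=> k hk; rewrite ffunE ifF ?(islin0 (@Tm_lin K N c k)) //.
  apply/negbTE; apply: contra hk => /eqP hk; apply/eqP; exact: val_inj.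
rewrite ffunE eqxx (islinZ (@Tm_lin K N c _)) TmXn /mono.
have hmm := mm_pos hN hn; have he := kk_eq hN hn.
case: eqP => h0.
  rewrite scalerA mulVf ?hc // scale1r; have h0' : kkN N n = 0%N := h0; rewrite h0' subn0 in he; by rewrite he.
by rewrite scale1r he.
Qed.

Lemma phi_dom (K : fieldType) N (c : nat -> K) (p : {poly K}) (k : 'I_N) :
  (0 < N)%N -> p`_0 = 0 -> (phiD N c p k)`_0 = 0.
Proof.
move=> hN p0; rewrite /phiD /linmon sum_ffunE coef_sum big1 // => [[[|i] hi]] _ /=.
  by rewrite ffunE coefZ p0 mul0r.
rewrite ffunE coefZ /EN /= ffunE; case: ifP => _; last by rewrite coef0 mulr0.
have := @mm_pos N i.+1 hN isT; set m := mmN N i.+1 => hm.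
by rewrite coefZ coefXn (eq_sym 0%N m) (gtn_eqF hm) /= !mulr0.
Qed.

Lemma psi_plus (K : fieldType) N (c : nat -> K) (F : SD K N) :
  (0 < N)%N -> (forall k, (F k)`_0 = 0) -> (@psiD _ N c F)`_0 = 0.
Proof.
move=> hN hF; rewrite /psiD coef_sum big1 // => k _.
rewrite /Tm /linmon coef_sum big1 // => [[[|i] hi]] _ /=.
  by rewrite coefZ hF mul0r.
by rewrite coefZ mono_coef0 ?mulr0.
Qed.

Lemma B00 (K : fieldType) N (c : nat -> K) (m : nat -> nat -> {poly K})
  (H0 : forall i j, (0 < i)%N -> (0 < j)%N ->
     preLie_br (bilin m) (c i *: 'X^(N * i)) (c j *: 'X^(N * j)) =
     (i%:R - j%:R) *: (c (i + j)%N *: 'X^(N * (i + j)))) (p q : {poly K}) :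
  p`_0 = 0 -> q`_0 = 0 ->
  preLie_br (bilin m) (Tm N c 0 p) (Tm N c 0 q) = Tm N c 0 (fdb_br p q).
Proof.
apply: (@bilin_ext _ _ (fun p q => preLie_br (bilin m) (Tm N c 0 p) (Tm N c 0 q))
   (fun p q => Tm N c 0 (fdb_br p q))).
- exact: (isbilin_comp (preLie_bilin m) (Tm_lin N c 0) (Tm_lin N c 0)).
- exact: (isbilin_post (bilin_bilin _) (Tm_lin N c 0)).
move=> i j hi hj /=; rewrite !TmXn /fdb_br bilinXX (islinZ (Tm_lin N c 0)) TmXn.
by rewrite /mono /= H0.
Qed.

Lemma Bk0 (K : fieldType) N (c : nat -> K) (m : nat -> nat -> {poly K}) k
  (H1 : forall k i j, (0 < k)%N -> (k < N)%N -> (0 < i)%N -> (0 < j)%N ->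
     preLie_br (bilin m) 'X^(N * i - k) (c j *: 'X^(N * j)) =
     (i%:R + - (k%:R / N%:R)) *: 'X^(N * (i + j) - k)) (p q : {poly K}) :
  (0 < k)%N -> (k < N)%N -> p`_0 = 0 -> q`_0 = 0 ->
  preLie_br (bilin m) (Tm N c k p) (Tm N c 0 q) =
  Tm N c k (Vact (- (k%:R / N%:R)) p q).
Proof.
move=> hk kN.
apply: (@bilin_ext _ _ (fun p q => preLie_br (bilin m) (Tm N c k p) (Tm N c 0 q))
   (fun p q => Tm N c k (Vact (- (k%:R / N%:R)) p q))).
- exact: (isbilin_comp (preLie_bilin m) (Tm_lin N c k) (Tm_lin N c 0)).
- exact: (isbilin_post (bilin_bilin _) (Tm_lin N c k)).
move=> i j hi hj /=; rewrite !TmXn /Vact bilinXX (islinZ (Tm_lin N c k)) TmXn.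
have hk0 : (k == 0%N) = false by rewrite eqn0Ngt hk.
by rewrite /mono /= hk0 H1.
Qed.

Lemma Bkl (K : fieldType) N (c : nat -> K) (m : nat -> nat -> {poly K}) k l
  (H2 : forall k l i j, (0 < k)%N -> (k < N)%N -> (0 < l)%N -> (l < N)%N ->
     (0 < i)%N -> (0 < j)%N ->
     preLie_br (bilin m) 'X^(N * i - k) 'X^(N * j - l) = 0) (p q : {poly K}) :
  (0 < k)%N -> (k < N)%N -> (0 < l)%N -> (l < N)%N -> p`_0 = 0 -> q`_0 = 0 ->
  preLie_br (bilin m) (Tm N c k p) (Tm N c l q) = 0.
Proof.
move=> hk kN hl lN.
apply: (@bilin_ext _ _ (fun p q => preLie_br (bilin m) (Tm N c k p) (Tm N c l q))
   (fun p q => 0)).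
- exact: (isbilin_comp (preLie_bilin m) (Tm_lin N c k) (Tm_lin N c l)).
- exact: isbilin0.
move=> i j hi hj /=; rewrite !TmXn.
have hk0 : (k == 0%N) = false by rewrite eqn0Ngt hk.
have hl0 : (l == 0%N) = false by rewrite eqn0Ngt hl.
by rewrite /mono hk0 hl0 H2.
Qed.

Lemma abstract_iso (K : fieldType) N (hN : (0 < N)%N) (c : nat -> K)
  (hc : forall i, (0 < i)%N -> c i != 0) (m : nat -> nat -> {poly K})
  (H0 : forall i j, (0 < i)%N -> (0 < j)%N ->
     preLie_br (bilin m) (c i *: 'X^(N * i)) (c j *: 'X^(N * j)) =
     (i%:R - j%:R) *: (c (i + j)%N *: 'X^(N * (i + j))))
  (H1 : forall k i j, (0 < k)%N -> (k < N)%N -> (0 < i)%N -> (0 < j)%N ->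
     preLie_br (bilin m) 'X^(N * i - k) (c j *: 'X^(N * j)) =
     (i%:R + - (k%:R / N%:R)) *: 'X^(N * (i + j) - k))
  (H2 : forall k l i j, (0 < k)%N -> (k < N)%N -> (0 < l)%N -> (l < N)%N ->
     (0 < i)%N -> (0 < j)%N ->
     preLie_br (bilin m) 'X^(N * i - k) 'X^(N * j - l) = 0) :
  exists psi : SD K N -> {poly K},
    lie_iso_onto (@SD_dom K N) (@SD_br K N) (preLie_br (bilin m)) psi.
Proof.
have domE (F : SD K N) : F \in SD_dom (N:=N) -> forall k, (F k)`_0 = 0.
  by move=> /forallP h k; apply/eqP; exact: h.
exists (@psiD K N c); split.
- by move=> F G _ _ a; rewrite psiD_lin.
- move=> F G hF hG e.
  by rewrite -(phi_psi hN hc (domE _ hF)) e (phi_psi hN hc (domE _ hG)).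
- by move=> F hF; apply/eqP; apply: psi_plus => //; exact: domE.
- move=> p /eqP p0; exists (phiD N c p); last exact: psi_phi.
  by apply/forallP => k; apply/eqP; exact: phi_dom.
move=> F G /domE hF /domE hG.
have [n eN] : exists n, N = n.+1 by exists N.-1; rewrite prednK.
subst N.
have eg (H : SD K n.+1) : SD_g H = H ord0.
  by rewrite /SD_g (big_pred1 ord0) // => l; rewrite /= -val_eqE.
have [bl br] := preLie_bilin m.
rewrite /psiD big_ord_recl ffunE /= !eg.
rewrite (islin_sum (bl _)) /=.
rewrite big_ord_recl /= big_ord_recl /=.
have bump0 (i : nat) : bump 0 i = i.+1 by [].
rewrite (islinD (br _)) (islin_sum (br _) (I:='I_n)).
rewrite (B00 H0 (hF _) (hG _)).
have e1 (i : 'I_n) : preLie_br (bilin m) (Tm n.+1 c (bump 0 i) (F (lift ord0 i)))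
       (Tm n.+1 c 0 (G ord0) + \sum_(i0 < n) Tm n.+1 c (bump 0 i0) (G (lift ord0 i0)))
     = Tm n.+1 c i.+1 (Vact (- (i.+1%:R / n.+1%:R)) (F (lift ord0 i)) (G ord0)).
  rewrite (islinD (br _)) (islin_sum (br _) (I:='I_n)) big1 ?addr0.
    by rewrite (@Bk0 _ _ _ _ _ H1) // ltnS ltn_ord.
  by move=> j _; rewrite (@Bkl _ _ _ _ _ _ H2) // ltnS ltn_ord.
have e2 (i : 'I_n) : preLie_br (bilin m) (Tm n.+1 c 0 (F ord0))
       (Tm n.+1 c (bump 0 i) (G (lift ord0 i)))
     = - Tm n.+1 c i.+1 (Vact (- (i.+1%:R / n.+1%:R)) (G (lift ord0 i)) (F ord0)).
  by rewrite preLie_anti (@Bk0 _ _ _ _ _ H1) // ltnS ltn_ord.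
have e3 (i : 'I_n) : Tm n.+1 c (bump 0 i) (SD_br F G (lift ord0 i)) =
     Tm n.+1 c i.+1 (Vact (- (i.+1%:R / n.+1%:R)) (F (lift ord0 i)) (G ord0)) -
     Tm n.+1 c i.+1 (Vact (- (i.+1%:R / n.+1%:R)) (G (lift ord0 i)) (F ord0)).
  by rewrite ffunE /= !eg (islinB (Tm_lin _ _ _)).
rewrite (eq_bigr _ (fun i _ => e1 i)) (eq_bigr _ (fun i _ => e2 i)).
rewrite (eq_bigr _ (fun i _ => e3 i)) sumrB sumrN.
by rewrite -addrA; congr (_ + _); rewrite addrC.
Qed.

Lemma br_sc (K : fieldType) (m : nat -> nat -> {poly K}) (s t : K) e f :
  preLie_br (bilin m) (s *: 'X^e) (t *: 'X^f) = (s * t) *: (m e f - m f e).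
Proof.
have [bl br] := bilin_bilin m.
rewrite /preLie_br (islinZ (bl _)) (islinZ (br _)) (islinZ (bl _)) (islinZ (br _)).
by rewrite !bilinXX !scalerA scalerBr mulrC.
Qed.

Lemma ndvd N i k : (0 < k)%N -> (k < N)%N -> (0 < i)%N -> ~~ (N %| N * i - k)%N.
Proof.
move=> hk kN hi; apply/negP => hd.
have : (N %| (N * i - k) + k)%N by rewrite subnK ?dvdn_mulr //; nia.
rewrite dvdn_addr // => /(dvdn_leq hk); rewrite leqNgt kN.
by [].
Qed.

Lemma Nnz (K : fieldType) (hK : [pchar K] =i pred0) N : (0 < N)%N -> (N%:R : K) != 0.
Proof. by move=> hN; rewrite (proj1 (pcharf0P K) hK) -lt0n. Qed.

Lemma g3_iso (K : fieldType) (hK : [pchar K] =i pred0) N (hN : (0 < N)%N)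
  (lam' mu : K) (hmu : mu != 0) :
  exists psi : SD K N -> {poly K},
    lie_iso_onto (@SD_dom K N) (@SD_br K N) (preLie_br (g3_pl N lam' mu)) psi.
Proof.
have hN' := Nnz hK hN.
apply: (@abstract_iso K N hN (fun _ => (mu * N%:R)^-1)).
- by move=> i _; rewrite invr_eq0 mulf_neq0.
- move=> i j hi hj; rewrite br_sc /g3_mon.
  have -> : (N * j == 0)%N = false by apply/negbTE; rewrite -lt0n; nia.
  have -> : (N * i == 0)%N = false by apply/negbTE; rewrite -lt0n; nia.
  rewrite !dvdn_mulr // (addnC (N * j)) -mulnDr -scalerBl !scalerA.
  congr (_ *: _); rewrite !natrM; field; by rewrite hN' hmu.
- move=> k i j hk kN hi hj; rewrite -[X in preLie_br _ X](scale1r) br_sc /g3_mon.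
  have -> : (N * j == 0)%N = false by apply/negbTE; rewrite -lt0n; nia.
  have -> : (N * i - k == 0)%N = false by apply/negbTE; rewrite -lt0n; nia.
  rewrite dvdn_mulr // (negbTE (ndvd hk kN hi)) subr0.
  have -> : (N * i - k + N * j = N * (i + j) - k)%N by nia.
  rewrite scalerA; congr (_ *: _); rewrite natrB; last by nia.
  rewrite natrM; field; by rewrite hN' hmu.
- move=> k l i j hk kN hl lN hi hj.
  rewrite -[X in preLie_br _ X](scale1r) -[X in preLie_br _ _ X](scale1r) br_sc /g3_mon.
  have -> : (N * j - l == 0)%N = false by apply/negbTE; rewrite -lt0n; nia.
  have -> : (N * i - k == 0)%N = false by apply/negbTE; rewrite -lt0n; nia.
  by rewrite (negbTE (ndvd hk kN hi)) (negbTE (ndvd hl lN hj)) subr0 scaler0.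
Qed.

Lemma g1_iso (K : fieldType) (hK : [pchar K] =i pred0) N (hN : (0 < N)%N)
  (lam a b : K) (ha : a != 0) (hb : forall n : nat, b != - (n.+1)%:R) :
  exists psi : SD K N -> {poly K},
    lie_iso_onto (@SD_dom K N) (@SD_br K N) (preLie_br (g1_pl N lam a b)) psi.
Proof.
have hN' := Nnz hK hN.
have hbi (i : nat) : (0 < i)%N -> i%:R + b != 0.
  by move=> hi; rewrite addrC addr_eq0 -(prednK hi); apply: hb.
have eN (j : nat) : (N * j)%:R / N%:R = j%:R :> K by rewrite natrM mulrAC mulfV ?mul1r.
apply: (@abstract_iso K N hN (fun i => (i%:R + b) / (a * N%:R))).
- by move=> i hi; rewrite mulf_neq0 ?invr_eq0 ?mulf_neq0 ?hbi.
- move=> i j hi hj; rewrite br_sc /g1_mon.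
  have -> : (N * j == 0)%N = false by apply/negbTE; rewrite -lt0n; nia.
  have -> : (N * i == 0)%N = false by apply/negbTE; rewrite -lt0n; nia.
  rewrite !dvdn_mulr // (addnC (N * j)) -mulnDr -scalerBl !scalerA !eN.
  have hi' := hbi i hi; have hj' := hbi j hj.
  congr (_ *: _); rewrite !natrM natrD; field; by rewrite hN' ha hi' hj'.
- move=> k i j hk kN hi hj; rewrite -[X in preLie_br _ X](scale1r) br_sc /g1_mon.
  have -> : (N * j == 0)%N = false by apply/negbTE; rewrite -lt0n; nia.
  have -> : (N * i - k == 0)%N = false by apply/negbTE; rewrite -lt0n; nia.
  rewrite dvdn_mulr // (negbTE (ndvd hk kN hi)) subr0 eN.
  have -> : (N * i - k + N * j = N * (i + j) - k)%N by nia.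
  have hj' := hbi j hj.
  rewrite scalerA; congr (_ *: _); rewrite natrB; last by nia.
  rewrite natrM; field; by rewrite hN' ha hj'.
- move=> k l i j hk kN hl lN hi hj.
  rewrite -[X in preLie_br _ X](scale1r) -[X in preLie_br _ _ X](scale1r) br_sc /g1_mon.
  have -> : (N * j - l == 0)%N = false by apply/negbTE; rewrite -lt0n; nia.
  have -> : (N * i - k == 0)%N = false by apply/negbTE; rewrite -lt0n; nia.
  by rewrite (negbTE (ndvd hk kN hi)) (negbTE (ndvd hl lN hj)) subr0 scaler0.
Qed.

Unset Implicit Arguments. Set Strict Implicit. Set Printing Implicit Defensive.

Theorem mainTheorem15 (K : fieldType) (hK : [pchar K] =i pred0)
    (N : nat) (hN : (1 <= N)%N) (lam lam' mu a b : K)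
    (hmu : mu != 0) (ha : a != 0) (hb : forall n : nat, b != - (n.+1)%:R) :
  (exists psi : SD K N -> {poly K},
      lie_iso_onto (@SD_dom K N) (@SD_br K N) (preLie_br (g1_pl N lam a b)) psi) /\
  (exists psi : SD K N -> {poly K},
      lie_iso_onto (@SD_dom K N) (@SD_br K N) (preLie_br (g3_pl N lam' mu)) psi).
Proof. by split; [apply: g1_iso | apply: g3_iso]. Qed.
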